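(* Let $p\ge 2$ and let $\mathbb{F}_p$ be a binary floating-point format with unit roundoff $u=2^{-p}$. Let $t\ge1$ and $s_A,s_B\ge1$ be integers, and let $A\in\mathbb{F}_p^{m\times k}$, $B\in\mathbb{F}_p^{k\times n}$ have all entries nonzero. With the scale factors $\alpha,\beta$ and integer slices $A_{(\ell)}$, $B^{(h)}$ defined in the context, let $$C'=\alpha\beta^T\circ\sum_{\substack{1\le\ell\le s_A,\ 1\le h\le s_B\\ \ell+h\le\max(s_A,s_B)+1}}2^{-(\ell+h)t}A_{(\ell)}B^{(h)},$$ a sum of $\chi(s_A,s_B)=s_m(2s_M-s_m+1)/2$ matrices, where $s_M=\max(s_A,s_B)$, $s_m=\min(s_A,s_B)$. Suppose $\hat C'$ is computed by forming each such product $A_{(\ell)}B^{(h)}$ exactly, converting it exactly to $\mathbb{F}_p$ and scaling it exactly by $2^{-(\ell+h)t}$ and $\alpha\beta^T$, and adding the resulting $\psi=\chi(s_A,s_B)$ matrices entrywise in floating-point arithmetic (in any order) satisfying $\mathrm{fl}(x+y)=(x+y)(1+\delta)$, $|\delta|\le u$, with no overflow or underflow, and $\psi u<1$. Then, entrywise: if $s_A\le s_B$, $$|AB-\hat C'|\le\bigl(\zeta_{A,B}+2^{-s_Bt}s_A\kappa_A\kappa_B+\gamma_\psi(1+\zeta_{A,B}+2^{-s_Bt}s_A\kappa_A\kappa_B)\bigr)|A|\,|B|,$$ and if $s_A>s_B$, $$|AB-\hat C'|\le\bigl(\zeta_{A,B}+2^{-s_At}s_B\kappa_A\kappa_B+\gamma_\psi(1+\zeta_{A,B}+2^{-s_At}s_B\kappa_A\kappa_B)\bigr)|A|\,|B|,$$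 where $\zeta_{A,B}=2^{-s_At}\kappa_A+2^{-s_Bt}\kappa_B+2^{-(s_A+s_B)t}\kappa_A\kappa_B$ and $\gamma_j=ju/(1-ju)$.
   Context: Absolute values of matrices and inequalities between matrices are entrywise; $\circ$ is the Hadamard product. For $x\in\mathbb{R}$, $[x]$ denotes truncation toward zero. Scale factors: $\alpha_i$ is the smallest power of two strictly larger than $\max_{1\le j\le k}|a_{ij}|$, and $\beta_j$ is the smallest power of two strictly larger than $\max_{1\le i\le k}|b_{ij}|$. Slices: $A_{(\ell)}=\bigl[2^{\ell t}\bigl(\mathrm{diag}(\alpha)^{-1}A-\sum_{r=1}^{\ell-1}2^{-rt}A_{(r)}\bigr)\bigr]$ for $\ell=1,\dots,s_A$, and $B^{(h)}=\bigl[2^{ht}\bigl(B\,\mathrm{diag}(\beta)^{-1}-\sum_{r=1}^{h-1}2^{-rt}B^{(r)}\bigr)\bigr]$ for $h=1,\dots,s_B$, applied entrywise. Scaling measures: $\kappa_A=2\max_i\frac{\max_j|a_{ij}|}{\min_j|a_{ij}|}$ and $\kappa_B=2\max_j\frac{\max_i|b_{ij}|}{\min_i|b_{ij}|}$. *)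

(* Defs.v *)
From HB Require Import structures.
From mathcomp Require Import all_boot all_order all_algebra.
Set Implicit Arguments. Unset Strict Implicit. Unset Printing Implicit Defensive.
Import Order.TTheory GRing.Theory Num.Theory.
Local Open Scope ring_scope.

Section Defs.
Variable R : archiRealFieldType.

(* Binary floating-point format F_p with p-bit significand, unbounded
   exponent range (the theorem assumes no overflow/underflow). *)
Definition is_fp (p : nat) (x : R) : Prop :=
  exists (M e : int), x = M%:~R * (2 : R) ^ e /\ (absz M < 2 ^ p)%N.

Definition unit_roundoff (p : nat) : R := (2 : R) ^- p.

Definition gamma (u : R) (j : nat) : R := (j%:R * u) / (1 - j%:R * u).

Definition trunc0 (x : R) : R :=
  if 0 <= x then (Num.floor x)%:~R else - (Num.floor (- x))%:~R.

Definition smallest_pow2_above (x y : R) : Prop :=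
  [/\ exists e : int, y = (2 : R) ^ e,
      x < y &
      forall e : int, x < (2 : R) ^ e -> y <= (2 : R) ^ e].

(* slices x n = [:: x_(1); ...; x_(n)] where
   x_(l) = [ 2^(l t) (x - \sum_(r=1)^(l-1) 2^(-r t) x_(r)) ]  *)
Fixpoint slices (t : nat) (x : R) (n : nat) : seq R :=
  match n with
  | 0 => [::]
  | n'.+1 =>
      let s := slices t x n' in
      rcons s (trunc0 ((2 : R) ^+ (n'.+1 * t) *
                 (x - \sum_(r < n') (2 : R) ^- (r.+1 * t) * s`_r)))
  end.

Definition slice (t : nat) (x : R) (l : nat) : R := (slices t x l)`_(l.-1).

Definition Aslice m k (t : nat) (alpha : 'I_m -> R) (A : 'M[R]_(m, k)) (l : nat)
  : 'M[R]_(m, k) := \matrix_(i, j) slice t (A i j / alpha i) l.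

Definition Bslice k n (t : nat) (beta : 'I_n -> R) (B : 'M[R]_(k, n)) (h : nat)
  : 'M[R]_(k, n) := \matrix_(i, j) slice t (B i j / beta j) h.

Definition rowmax m k (A : 'M[R]_(m, k)) (i : 'I_m) : R :=
  \big[Num.max/0]_(j < k) `|A i j|.
(* minimum of |a_ij| over j (k >= 1); the default value rowmax is >= every
   entry, so it does not affect the minimum of a nonempty row *)
Definition rowmin m k (A : 'M[R]_(m, k)) (i : 'I_m) : R :=
  \big[Num.min/rowmax A i]_(j < k) `|A i j|.
Definition colmax k n (B : 'M[R]_(k, n)) (j : 'I_n) : R :=
  \big[Num.max/0]_(i < k) `|B i j|.
Definition colmin k n (B : 'M[R]_(k, n)) (j : 'I_n) : R :=
  \big[Num.min/colmax B j]_(i < k) `|B i j|.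

Definition kappaA m k (A : 'M[R]_(m, k)) : R :=
  2 * \big[Num.max/0]_(i < m) (rowmax A i / rowmin A i).
Definition kappaB k n (B : 'M[R]_(k, n)) : R :=
  2 * \big[Num.max/0]_(j < n) (colmax B j / colmin B j).

(* floating-point summation in any order: fl_sum p l s means that s can be
   obtained by adding the values in the list l (in any order and any
   parenthesization) where every addition satisfies
   fl(x+y) = (x+y)(1+d), |d| <= u = 2^-p, with result in F_p. *)
Inductive fl_sum (p : nat) : seq R -> R -> Prop :=
| fl_sum_leaf x : fl_sum p [:: x] x
| fl_sum_node l l1 l2 s1 s2 d :
    perm_eq l (l1 ++ l2) -> fl_sum p l1 s1 -> fl_sum p l2 s2 ->
    `|d| <= unit_roundoff p -> is_fp p ((s1 + s2) * (1 + d)) ->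
    fl_sum p l ((s1 + s2) * (1 + d)).

End Defs.

Definition slice_pairs (sA sB : nat) : seq (nat * nat) :=
  [seq lh <- [seq (l, h) | l <- iota 1 sA, h <- iota 1 sB]
     | (lh.1 + lh.2 <= maxn sA sB + 1)%N].

Definition chi (sA sB : nat) : nat :=
  ((minn sA sB) * (2 * maxn sA sB - minn sA sB + 1)) %/ 2.

(* Main.v *)
Require Import Defs.
From HB Require Import structures.
From mathcomp Require Import all_boot all_order all_algebra.
From mathcomp Require Import zify ring lra.
Set Implicit Arguments. Unset Strict Implicit. Unset Printing Implicit Defensive.
Import Order.TTheory GRing.Theory Num.Theory.
Local Open Scope ring_scope.

Local Open Scope ring_scope.

Section Slices.
Variable R : archiRealFieldType.
Variable t : nat.
Implicit Types x y : R.

Definition w (n : nat) : R := (2 : R) ^- (n * t).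

Lemma w_gt0 n : 0 < w n.
Proof. by rewrite /w invr_gt0 exprn_gt0. Qed.

Lemma wD a b : w (a + b) = w a * w b.
Proof. by rewrite /w mulnDl exprD invfM. Qed.

Lemma w0 : w 0 = 1.
Proof. by rewrite /w mul0n expr0 invr1. Qed.

Lemma trunc0P y : `|y| = `|Defs.trunc0 y| + `|y - Defs.trunc0 y| /\ `|y - Defs.trunc0 y| <= 1.
Proof.
rewrite /Defs.trunc0; case: ifP => hy.
  have h1 := floor_le y; have h2 := floorD1_gt y.
  have h0 : 0 <= (Num.floor y)%:~R :> R by rewrite ler0z floor_ge0.
  rewrite intrD in h2.
  rewrite (ger0_norm hy) (ger0_norm h0) (ger0_norm (x:=y - _)); last by rewrite subr_ge0.
  by split; [ring | lra].
have hy' : y < 0 by rewrite ltNge hy.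
have h1 := floor_le (- y); have h2 := floorD1_gt (- y).
have h0 : 0 <= (Num.floor (- y))%:~R :> R by rewrite ler0z floor_ge0 oppr_ge0 ltW.
rewrite intrD in h2.
rewrite (ltr0_norm hy') normrN (ger0_norm h0).
rewrite (ler0_norm (x:=y - _)); last by lra.
by split; [ring | lra].
Qed.

Lemma size_slices x N : size (slices t x N) = N.
Proof. by elim: N => //= N IH; rewrite size_rcons IH. Qed.

Lemma nth_slices x N r : (r < N)%N -> (slices t x N)`_r = slice t x r.+1.
Proof.
elim: N => // N IH; rewrite ltnS leq_eqVlt => /orP[/eqP ->|hr].
  by [].
by rewrite /= nth_rcons size_slices hr IH.
Qed.

Definition res x N := x - \sum_(r < N) w r.+1 * slice t x r.+1.

Lemma slice_step x N : slice t x N.+1 = Defs.trunc0 ((2:R) ^+ (N.+1 * t) * res x N).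
Proof.
rewrite /slice /= nth_rcons size_slices ltnn eqxx /res.
congr (Defs.trunc0 (_ * (_ - _))); apply: eq_bigr => i _.
by rewrite nth_slices.
Qed.

Lemma res_step x N : res x N.+1 = res x N - w N.+1 * slice t x N.+1.
Proof. by rewrite /res big_ord_recr /=; ring. Qed.

Lemma res_inv x N :
  `|res x N| = w N.+1 * `|slice t x N.+1| + `|res x N.+1| /\
  `|res x N.+1| <= w N.+1.
Proof.
pose y := (2:R) ^+ (N.+1 * t) * res x N.
have hw : w N.+1 * (2:R) ^+ (N.+1 * t) = 1 by rewrite /w mulVf // expf_neq0 // pnatr_eq0.
have e1 : res x N = w N.+1 * y by rewrite /y mulrA hw mul1r.
have e2 : res x N.+1 = w N.+1 * (y - Defs.trunc0 y) by rewrite res_step slice_step -/y e1; ring.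
have [h1 h2] := trunc0P y.
have hw0 := w_gt0 N.+1.
have hs : slice t x N.+1 = Defs.trunc0 y by rewrite slice_step. clearbody y.
rewrite e2 e1 !normrM (gtr0_norm hw0) h1 hs; split; first by ring.
by rewrite -[X in _ <= X]mulr1 ler_wpM2l // ltW.
Qed.

Lemma res0 x : res x 0 = x.
Proof. by rewrite /res big_ord0 subr0. Qed.

Lemma res_le x N : `|x| <= 1 -> `|res x N| <= w N.
Proof.
case: N => [|N]; first by rewrite res0 w0.
by move=> _; case: (res_inv x N).
Qed.

Lemma res_mono x N : `|res x N.+1| <= `|res x N|.
Proof.
case: (res_inv x N) => -> _.
by rewrite lerDr mulr_ge0 // ltW // w_gt0.
Qed.

Lemma slice_le x l : `|x| <= 1 -> w l.+1 * `|slice t x l.+1| <= w l.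
Proof.
move=> hx; case: (res_inv x l) => e _.
apply: le_trans (res_le l hx); rewrite e lerDl //.
Qed.

Lemma abs_sum x N : `|x| = \sum_(r < N) w r.+1 * `|slice t x r.+1| + `|res x N|.
Proof.
elim: N => [|N IH]; first by rewrite big_ord0 add0r res0.
rewrite big_ord_recr /= IH; case: (res_inv x N) => -> _; ring.
Qed.

Lemma partial_sum x N : \sum_(r < N) w r.+1 * slice t x r.+1 = x - res x N.
Proof. by rewrite /res; ring. Qed.

Lemma tail_le x c N : (1 <= c)%N ->
  \sum_(r < N | (c <= r.+1)%N) w r.+1 * `|slice t x r.+1|
     <= `|res x c.-1| - `|res x (maxn N c.-1)|.
Proof.
move=> hc; elim: N => [|N IH].
  by rewrite big_ord0 max0n subrr.
rewrite big_mkcond big_ord_recr /= -big_mkcond /=.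
case: ifP => hcN.
  have -> : maxn N.+1 c.-1 = N.+1 by apply/maxn_idPl; lia.
  have e : maxn N c.-1 = N by apply/maxn_idPl; lia.
  rewrite e in IH; case: (res_inv x N) => e2 _.
  move: IH; rewrite e2 => IH; lra.
have -> : maxn N.+1 c.-1 = c.-1 by apply/maxn_idPr; lia.
have e : maxn N c.-1 = c.-1 by apply/maxn_idPr; lia.
by rewrite e in IH; rewrite addr0.
Qed.

End Slices.

Local Open Scope ring_scope.

Section FL.
Variable R : archiRealFieldType.
Variable p : nat.
Local Notation u := (unit_roundoff R p).

Lemma u_ge0 : 0 <= u.
Proof. by rewrite /unit_roundoff invr_ge0 exprn_ge0. Qed.

Lemma predn_lt a b : (0 < a)%N -> (0 < b)%N -> (a.-1 < (a+b).-1)%N.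
Proof. move=> ha hb; lia. Qed.
Lemma predn_lt' a b : (0 < a)%N -> (0 < b)%N -> (b.-1 < (a+b).-1)%N.
Proof. move=> ha hb; lia. Qed.

Lemma fl_size (l : seq R) s : fl_sum p l s -> (0 < size l)%N.
Proof.
elim=> // l0 l1 l2 s1 s2 d hp _ h1 _ h2 _ _.
by rewrite (perm_size hp) size_cat addn_gt0 h1.
Qed.

Lemma fl_err (l : seq R) s : fl_sum p l s ->
  `|s - \sum_(x <- l) x| <= ((1 + u) ^+ (size l).-1 - 1) * \sum_(x <- l) `|x|.
Proof.
elim=> [x|l0 l1 l2 s1 s2 d hp f1 IH1 f2 IH2 hd _].
  by rewrite big_seq1 subrr normr0 /= expr0 subrr mul0r.
have n1 := fl_size f1; have n2 := fl_size f2.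
rewrite (perm_size hp) size_cat (perm_big _ hp) (perm_big _ hp) !big_cat /=.
set S1 := \sum_(x <- l1) x in IH1 *; set S2 := \sum_(x <- l2) x in IH2 *.
set T1 := \sum_(x <- l1) `|x| in IH1 *; set T2 := \sum_(x <- l2) `|x| in IH2 *.
have hS1 : `|S1| <= T1 by apply: ler_norm_sum.
have hS2 : `|S2| <= T2 by apply: ler_norm_sum.
have hu := u_ge0.
set g1 := (1 + u) ^+ (size l1).-1 - 1 in IH1 *.
set g2 := (1 + u) ^+ (size l2).-1 - 1 in IH2 *.
set G := (1 + u) ^+ (size l1 + size l2).-1.
have hg1 : 0 <= g1 by rewrite subr_ge0 exprn_ege1 // lerDl.
have hg2 : 0 <= g2 by rewrite subr_ge0 exprn_ege1 // lerDl.
have e1 : (1 + u) * (1 + g1) <= G.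
  have -> : 1 + g1 = (1+u)^+(size l1).-1 by rewrite /g1; ring.
  rewrite -exprS /G; apply: ler_weXn2l; first by rewrite lerDl.
  exact: predn_lt.
have e2 : (1 + u) * (1 + g2) <= G.
  have -> : 1 + g2 = (1+u)^+(size l2).-1 by rewrite /g2; ring.
  rewrite -exprS /G; apply: ler_weXn2l; first by rewrite lerDl.
  exact: predn_lt'.
have hs1 : `|s1| <= (1 + g1) * T1.
  have : `|s1| <= `|s1 - S1| + `|S1| by rewrite -[X in `|X| <= _](subrK S1) ler_normD.
  lra.
have hs2 : `|s2| <= (1 + g2) * T2.
  have : `|s2| <= `|s2 - S2| + `|S2| by rewrite -[X in `|X| <= _](subrK S2) ler_normD.
  lra.
have eq : (s1 + s2) * (1 + d) - (S1 + S2) = (s1 - S1) + (s2 - S2) + d * (s1 + s2) by ring.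
rewrite eq.
have hT1 : 0 <= T1 by apply: sumr_ge0 => *.
have hT2 : 0 <= T2 by apply: sumr_ge0 => *.
have hdd : `|d * (s1 + s2)| <= u * ((1 + g1) * T1 + (1 + g2) * T2).
  rewrite normrM; apply: ler_pM => //.
  by apply: le_trans (ler_normD _ _) _; apply: lerD.
apply: le_trans (ler_normD _ _) _.
apply: le_trans (lerD (ler_normD _ _) hdd) _.
have hG1 : ((1 + u) * (1 + g1) - 1) * T1 <= (G - 1) * T1.
  by nra.
have hG2 : ((1 + u) * (1 + g2) - 1) * T2 <= (G - 1) * T2.
  by nra.
nra.
Qed.

Lemma gamma_bound j : j%:R * u < 1 -> (1 + u) ^+ j - 1 <= gamma u j.
Proof.
move=> hj; have hu := u_ge0.
have key : forall i, (1 + u) ^+ i * (1 - i%:R * u) <= 1.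
  elim=> [|i IH]; first by rewrite expr0 mul0r subr0 mulr1.
  have hp : 0 <= (1 + u) ^+ i by rewrite exprn_ge0 // addr_ge0.
  have hi : 0 <= i%:R :> R by rewrite ler0n.
  have hq : (1 + u) * (1 - i.+1%:R * u) <= 1 - i%:R * u.
    rewrite -natr1; nra.
  rewrite exprSr -mulrA; apply: le_trans IH; exact: ler_wpM2l.
have h := key j.
rewrite /gamma ler_pdivlMr ?subr_gt0 //.
nra.
Qed.

End FL.

Local Close Scope ring_scope.


Section PairsSum.
Variables (T : Type) (idx : T) (op : Monoid.com_law idx).

Lemma iota1_big n (G : nat -> T) :
  \big[op/idx]_(l <- iota 1 n) G l = \big[op/idx]_(l < n) G l.+1.
Proof.
rewrite -(big_mkord xpredT (fun l => G l.+1)) /index_iota subn0.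
rewrite -[1%N]/(1 + 0)%N iotaDl big_map.
by apply: eq_bigr => i _; rewrite add1n.
Qed.

Lemma pairs_big sA sB (F : nat * nat -> T) :
  \big[op/idx]_(lh <- slice_pairs sA sB) F lh =
  \big[op/idx]_(l < sA) \big[op/idx]_(h < sB | (l.+1 + h.+1 <= maxn sA sB + 1)%N)
      F (l.+1, h.+1).
Proof.
rewrite /slice_pairs big_filter big_mkcond big_allpairs iota1_big.
apply: eq_bigr => l _; rewrite iota1_big [RHS]big_mkcond /=.
by apply: eq_bigr.
Qed.
End PairsSum.

Lemma count_lt b c : (\sum_(h < b | (h < c)%N) 1 = minn b c)%N.
Proof.
elim: b => [|b IH]; first by rewrite big_ord0 min0n.
rewrite big_mkcond big_ord_recr /= -big_mkcond IH.
case: ifP => h; lia.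
Qed.

Lemma sum_min_step n b M S :
  (n < M)%N -> (2 * S + ((n + b) - M.+1) * ((n + b) - M.+1).+1 = 2 * n * b)%N ->
  (2 * (S + minn b (M - n)) + ((n.+1 + b) - M.+1) * ((n.+1 + b) - M.+1).+1
     = 2 * n.+1 * b)%N.
Proof.
move=> hn; case: (leqP (n + b) M) => hb.
  have -> : ((n + b) - M.+1 = 0)%N by lia.
  have -> : ((n.+1 + b) - M.+1 = 0)%N by lia.
  have -> : minn b (M - n) = b by lia.
  lia.
set d := ((n + b) - M.+1)%N.
have -> : ((n.+1 + b) - M.+1 = d.+1)%N by rewrite /d; lia.
have -> : minn b (M - n) = (M - n)%N by lia.
have hd : (d + M.+1 = n + b)%N by rewrite /d; lia.
move=> h; nia.
Qed.

Lemma sum_min n b M : (n <= M)%N -> (b <= M)%N ->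
  (2 * (\sum_(l < n) minn b (M - l)) + ((n + b) - M.+1) * ((n + b) - M.+1).+1
     = 2 * n * b)%N.
Proof.
move=> + hb; elim: n => [|n IH] hn.
  rewrite big_ord0; have -> : ((0 + b) - M.+1 = 0)%N by lia.
  by [].
rewrite big_ord_recr /=; apply: sum_min_step => //.
apply: IH; lia.
Qed.

Lemma size_pairs sA sB : size (slice_pairs sA sB) = chi sA sB.
Proof.
rewrite -sum1_size pairs_big.
have e : forall l : 'I_sA, (\sum_(h < sB | (l.+1 + h.+1 <= maxn sA sB + 1)%N) 1
     = minn sB (maxn sA sB - l))%N.
  move=> l; rewrite -count_lt; apply: eq_bigl => h; apply/idP/idP; lia.
rewrite (eq_bigr _ (fun l _ => e l)).
have := @sum_min sA sB (maxn sA sB) (leq_maxl _ _) (leq_maxr _ _).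
set S := (\sum_(l < sA) _)%N => h.
rewrite /chi.
have -> : (minn sA sB * (2 * maxn sA sB - minn sA sB + 1) = S * 2)%N.
  case: (leqP sA sB) => hab.
    have eM : maxn sA sB = sB by lia.
    have em : minn sA sB = sA by lia.
    rewrite eM in h.
    have e2 : ((sA + sB) - sB.+1 = sA.-1)%N by lia.
    rewrite e2 in h.
    nia.
  have eM : maxn sA sB = sA by lia.
  have em : minn sA sB = sB by lia.
  rewrite eM in h.
  have e2 : ((sA + sB) - sA.+1 = sB.-1)%N by lia.
  rewrite e2 in h.
  nia.
by rewrite mulnK.
Qed.

Local Open Scope ring_scope.

Local Open Scope ring_scope.

Section PerK.
Variable R : archiRealFieldType.
Variable t : nat.
Local Notation w := (@w R t).
Local Notation res := (@res R t).

Lemma count_bound (n M b : nat) (c : R) : 0 <= c ->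
  \sum_(l < n) (if (M - l < b)%N then c else 0) <= (n - (M - b))%:R * c.
Proof.
move=> hc; elim: n => [|n IH]; first by rewrite big_ord0 sub0n mul0r.
rewrite big_ord_recr /=; case: ifP => h.
  have -> : (n.+1 - (M - b) = (n - (M - b)).+1)%N by lia.
  by rewrite -natr1 mulrDl mul1r lerD2r.
rewrite addr0; apply: le_trans IH _; apply: ler_wpM2r => //.
by rewrite ler_nat; lia.
Qed.

Lemma perkk (x y : R) sA sB : `|x| <= 1 -> `|y| <= 1 ->
  `|x * y - \sum_(l < sA) \sum_(h < sB | (l.+1 + h.+1 <= maxn sA sB + 1)%N)
       (w l.+1 * slice t x l.+1) * (w h.+1 * slice t y h.+1)|
   <= w sA * `|y| + w sB * `|x| + (sA - (maxn sA sB - sB))%:R * w (maxn sA sB).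
Proof.
move=> hx hy.
set M := maxn sA sB.
set P := fun (l h : nat) => (l.+1 + h.+1 <= M + 1)%N.
set p := fun l => w l.+1 * slice t x l.+1.
set q := fun h => w h.+1 * slice t y h.+1.
have split : forall l : 'I_sA,
  \sum_(h < sB | P l h) p l * q h =
  p l * \sum_(h < sB) q h - \sum_(h < sB | ~~ P l h) p l * q h.
  move=> l; rewrite mulr_sumr [in RHS](bigID (fun h : 'I_sB => P l h) xpredT) /=; ring.
rewrite (eq_bigr _ (fun l _ => split l)) sumrB -mulr_suml.
rewrite /p /q !partial_sum.
set rA := res x sA; set rB := res y sB.
set D := \sum_(l < sA) _.
have eq : x * y - ((x - rA) * (y - rB) - D) = rA * y + (x - rA) * rB + D by ring.
rewrite eq.
have h1 : `|rA * y| <= w sA * `|y| by rewrite normrM ler_wpM2r // res_le.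
have h2 : `|(x - rA) * rB| <= w sB * `|x|.
  rewrite normrM mulrC; apply: ler_pM => //; first exact: res_le.
  rewrite -partial_sum; apply: le_trans (ler_norm_sum _ _ _) _.
  rewrite (abs_sum t x sA).
  under eq_bigr do rewrite normrM (gtr0_norm (w_gt0 _ _ _)).
  by rewrite lerDl.
have h3 : `|D| <= (sA - (M - sB))%:R * w M.
  apply: le_trans (ler_norm_sum _ _ _) _.
  apply: le_trans (count_bound sA M sB (ltW (w_gt0 R t M))).
  apply: ler_sum => l _.
  rewrite -mulr_sumr normrM.
  have hp : `|p l| <= w l by rewrite /p normrM (gtr0_norm (w_gt0 _ _ _)) slice_le.
  have hq : `|\sum_(h < sB | ~~ P l h) q h| <=
            `|res y (M - l)| - `|res y (maxn sB (M - l))|.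
    apply: le_trans (ler_norm_sum _ _ _) _.
    have := @tail_le R t y (M - l).+1 sB isT.
    rewrite /=; apply: le_trans; rewrite le_eqVlt; apply/orP; left; apply/eqP.
    apply: eq_big => h.
      by rewrite /P; apply/idP/idP; lia.
    by rewrite /q normrM (gtr0_norm (w_gt0 _ _ _)).
  have hl : (l < M)%N by rewrite /M; have := ltn_ord l; lia.
  case: ifP => hc.
    change (`|p l| * `|\sum_(h < sB | ~~ P l h) q h| <= w M).
    have em : maxn sB (M - l) = sB by lia.
    rewrite em in hq.
    have hr := res_le t sB hy.
    have hr2 := res_le t (M - l) hy.
    have -> : w M = w l * w (M - l) by rewrite -wD; congr w; lia.
    apply: ler_pM => //.
    by apply: le_trans hq _; apply: le_trans hr2; rewrite lerBlDr lerDl.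
  change (`|p l| * `|\sum_(h < sB | ~~ P l h) q h| <= 0).
  have em : maxn sB (M - l) = (M - l)%N by lia.
  rewrite em subrr in hq.
  have hn := normr_ge0 (p l); nra.
apply: le_trans (ler_normD _ _) _; apply: lerD => //.
by apply: le_trans (ler_normD _ _) _; apply: lerD.
Qed.
End PerK.

Local Open Scope ring_scope.

Section Facts.
Variable R : archiRealFieldType.

Lemma pow2_facts (r al : R) : 0 < r -> smallest_pow2_above r al ->
  0 < al /\ r < al /\ al <= 2 * r.
Proof.
move=> hr [[e ->] hlt hmin].
have h2 : (2 : R) != 0 by rewrite pnatr_eq0.
have hpos : 0 < (2 : R) ^ e by apply: exprz_gt0.
split=> //; split=> //.
rewrite leNgt; apply/negP => hc.
have e1 : (2 : R) ^ (e + -1) = (2 : R) ^ e / 2 by rewrite expfzDr // exprN1.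
have : r < (2 : R) ^ (e + -1) by rewrite e1; lra.
move/hmin; rewrite e1; lra.
Qed.

Lemma bigmax_ge (n : nat) (F : 'I_n -> R) j : F j <= \big[Num.max/0]_(i < n) F i.
Proof. by rewrite (bigD1 j) //= le_max lexx. Qed.



Lemma row_facts m k (A : 'M[R]_(m, k)) i kk al :
  (forall j, A i j != 0) -> smallest_pow2_above (rowmax A i) al ->
  [/\ 0 < al, `|A i kk| < al, al <= kappaA A * `|A i kk| & 0 <= kappaA A].
Proof.
move=> nz hal.
have hmax : `|A i kk| <= rowmax A i by rewrite /rowmax (bigD1 kk) //= le_max lexx.
have ha : 0 < `|A i kk| by rewrite normr_gt0.
have hmpos : 0 < rowmax A i by apply: lt_le_trans hmax.
have hmin : rowmin A i <= `|A i kk| by rewrite /rowmin (bigD1 kk) //= ge_min lexx.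
have hminpos : 0 < rowmin A i.
  rewrite /rowmin; elim/big_ind: _ => //.
    by move=> a b h1 h2; rewrite lt_min h1.
  by move=> j _; rewrite normr_gt0.
have [h1 [h2 h3]] := pow2_facts hmpos hal.
have hk : 2 * (rowmax A i / rowmin A i) <= kappaA A.
  by rewrite /kappaA ler_pM2l // (bigD1 i) //= le_max lexx.
have hr0 : 0 <= rowmax A i / rowmin A i by rewrite divr_ge0 // ltW.
split=> //.
- exact: le_lt_trans hmax h2.
- apply: (le_trans h3).
  have -> : 2 * rowmax A i = 2 * (rowmax A i / rowmin A i) * rowmin A i.
    by rewrite -mulrA mulfVK // gt_eqF.
  apply: ler_pM => //; first by rewrite mulr_ge0.
  exact: ltW.
- by apply: le_trans hk; rewrite mulr_ge0.
Qed.

Lemma col_facts k n (B : 'M[R]_(k, n)) j kk be :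
  (forall i, B i j != 0) -> smallest_pow2_above (colmax B j) be ->
  [/\ 0 < be, `|B kk j| < be, be <= kappaB B * `|B kk j| & 0 <= kappaB B].
Proof.
move=> nz hbe.
have hmax : `|B kk j| <= colmax B j by rewrite /colmax (bigD1 kk) //= le_max lexx.
have ha : 0 < `|B kk j| by rewrite normr_gt0.
have hmpos : 0 < colmax B j by apply: lt_le_trans hmax.
have hmin : colmin B j <= `|B kk j| by rewrite /colmin (bigD1 kk) //= ge_min lexx.
have hminpos : 0 < colmin B j.
  rewrite /colmin; elim/big_ind: _ => //.
    by move=> a b h1 h2; rewrite lt_min h1.
  by move=> i _; rewrite normr_gt0.
have [h1 [h2 h3]] := pow2_facts hmpos hbe.
have hk : 2 * (colmax B j / colmin B j) <= kappaB B.
  by rewrite /kappaB ler_pM2l // (bigD1 j) //= le_max lexx.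
have hr0 : 0 <= colmax B j / colmin B j by rewrite divr_ge0 // ltW.
split=> //.
- exact: le_lt_trans hmax h2.
- apply: (le_trans h3).
  have -> : 2 * colmax B j = 2 * (colmax B j / colmin B j) * colmin B j.
    by rewrite -mulrA mulfVK // gt_eqF.
  apply: ler_pM => //; first by rewrite mulr_ge0.
  exact: ltW.
- by apply: le_trans hk; rewrite mulr_ge0.
Qed.

End Facts.

Local Open Scope ring_scope.

Lemma sum_drop_cond (R : numDomainType) n (P : pred 'I_n) (F : 'I_n -> R) :
  (forall i, 0 <= F i) -> \sum_(i < n | P i) F i <= \sum_(i < n) F i.
Proof.
move=> h; rewrite big_mkcond /=; apply: ler_sum => i _.
by case: ifP => // _; apply: h.
Qed.

Lemma abs_sum_le (R : archiRealFieldType) t (x : R) N :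
  \sum_(l < N) `|w R t l.+1 * slice t x l.+1| <= `|x|.
Proof.
rewrite (abs_sum t x N).
under eq_bigr do rewrite normrM (gtr0_norm (w_gt0 _ _ _)).
by rewrite lerDl.
Qed.

Lemma bigmax0_ge0 (R : realDomainType) (n : nat) (F : 'I_n -> R) :
  0 <= \big[Num.max/0]_(i < n) F i.
Proof.
apply: (big_rec (fun v => 0 <= v)) => // i v _ hv.
by rewrite le_max hv orbT.
Qed.

Lemma perkk_scale (R : realFieldType) (al be a b kA kB c1 c2 c3 z : R) :
  0 < al -> 0 < be -> 0 <= a -> 0 <= b -> al <= kA * a -> be <= kB * b ->
  0 <= c1 -> 0 <= c2 -> 0 <= c3 -> 0 <= z ->
  al * be * (c1 * (b / be) + c2 * (a / al) + c3) <=
  (c1 * kA + c2 * kB + z + c3 * kA * kB) * (a * b).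
Proof.
move=> hal hbe ha hb h1 h2 hc1 hc2 hc3 hz.
have -> : al * be * (c1 * (b / be) + c2 * (a / al) + c3) =
          c1 * (al * b) + c2 * (be * a) + c3 * (al * be).
  by field; rewrite ?gt_eqF.
have t1 : c1 * (al * b) <= c1 * (kA * a * b).
  by apply: ler_wpM2l => //; apply: ler_wpM2r.
have t2 : c2 * (be * a) <= c2 * (kB * b * a).
  by apply: ler_wpM2l => //; apply: ler_wpM2r.
have t3 : c3 * (al * be) <= c3 * ((kA * a) * (kB * b)).
  by apply: ler_wpM2l => //; apply: ler_pM => //; apply: ltW.
have t4 : 0 <= z * (a * b) by rewrite !mulr_ge0.
have -> : (c1 * kA + c2 * kB + z + c3 * kA * kB) * (a * b) =
  c1 * (kA * a * b) + c2 * (kB * b * a) + z * (a * b) + c3 * ((kA * a) * (kB * b)) by ring.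
lra.
Qed.

Section Core.
Variables (R : archiRealFieldType) (t sA sB m k n : nat).
Variables (A : 'M[R]_(m, k)) (B : 'M[R]_(k, n)) (alpha : 'I_m -> R) (beta : 'I_n -> R).
Variables (i : 'I_m) (j : 'I_n).
Local Notation al := (alpha i).
Local Notation be := (beta j).
Local Notation X l kk := (slice t (A i kk / al) l).
Local Notation Y h kk := (slice t (B kk j / be) h).
Local Notation G kk l h :=
  (al * be * ((w R t l * X l kk) * (w R t h * Y h kk))).

Lemma eterm l h :
  al * be * ((2 : R) ^- ((l + h) * t) *
     (Aslice t alpha A l *m Bslice t beta B h) i j) = \sum_(kk < k) G kk l h.
Proof.
rewrite mxE mulr_sumr mulr_sumr; apply: eq_bigr => kk _; rewrite !mxE.
have ew : (2 : R) ^- ((l + h) * t) = w R t l * w R t h by rewrite -wD.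
rewrite ew; ring.
Qed.

End Core.

Unset Implicit Arguments.

Theorem mainTheorem2 (R : archiRealFieldType) (p t sA sB m k n : nat)
  (A : 'M[R]_(m, k)) (B : 'M[R]_(k, n))
  (alpha : 'I_m -> R) (beta : 'I_n -> R) (Chat : 'M[R]_(m, n)) :
  (2 <= p)%N -> (1 <= t)%N -> (1 <= sA)%N -> (1 <= sB)%N ->
  (forall i j, is_fp p (A i j)) -> (forall i j, is_fp p (B i j)) ->
  (forall i j, A i j != 0) -> (forall i j, B i j != 0) ->
  (forall i, smallest_pow2_above (rowmax A i) (alpha i)) ->
  (forall j, smallest_pow2_above (colmax B j) (beta j)) ->
  (* each product A_(l) B^(h) is converted exactly to F_p *)
  (forall l h, (l, h) \in slice_pairs sA sB ->
     forall i j, is_fp p ((Aslice t alpha A l *m Bslice t beta B h) i j)) ->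
  (chi sA sB)%:R * unit_roundoff R p < 1 ->
  (forall i j, fl_sum p
     [seq alpha i * beta j *
          ((2 : R) ^- ((lh.1 + lh.2) * t) *
           (Aslice t alpha A lh.1 *m Bslice t beta B lh.2) i j)
     | lh <- slice_pairs sA sB]
     (Chat i j)) ->
  let u := unit_roundoff R p in
  let psi := chi sA sB in
  let kA := kappaA A in
  let kB := kappaB B in
  let zeta := (2 : R) ^- (sA * t) * kA + (2 : R) ^- (sB * t) * kB
              + (2 : R) ^- ((sA + sB) * t) * kA * kB in
  ((sA <= sB)%N ->
     forall i j, `|(A *m B) i j - Chat i j| <=
       (zeta + (2 : R) ^- (sB * t) * sA%:R * kA * kB
        + gamma u psi * (1 + zeta + (2 : R) ^- (sB * t) * sA%:R * kA * kB))
       * (map_mx Num.norm A *m map_mx Num.norm B) i j) /\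
  ((sB < sA)%N ->
     forall i j, `|(A *m B) i j - Chat i j| <=
       (zeta + (2 : R) ^- (sA * t) * sB%:R * kA * kB
        + gamma u psi * (1 + zeta + (2 : R) ^- (sA * t) * sB%:R * kA * kB))
       * (map_mx Num.norm A *m map_mx Num.norm B) i j).
Proof.
move=> hp ht hsA hsB _ _ nA nB hal hbe _ hpsi hfl u psi kA kB zeta.
pose M := maxn sA sB.
pose N := (sA - (M - sB))%N.
pose E := zeta + w R t M * N%:R * kA * kB.
suff core : forall i j, `|(A *m B) i j - Chat i j| <=
    (E + gamma u psi * (1 + E)) * (map_mx Num.norm A *m map_mx Num.norm B) i j.
  split=> hc i j; have := core i j; rewrite /E /N /M.
    have -> : maxn sA sB = sB by lia.
    by rewrite subnn subn0 /w [1 + (_ + _)]addrA.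
  have -> : maxn sA sB = sA by lia.
  have -> : (sA - (sA - sB) = sB)%N by lia.
  by rewrite /w [1 + (_ + _)]addrA.
move=> i j.
have hf := hfl i j.
move: hf; set L := (seq.map _ _) => hf.
set al := alpha i; set be := beta j.
have hG0 : 0 <= gamma u psi.
  rewrite /gamma divr_ge0 //; first by rewrite mulr_ge0 // /u /unit_roundoff invr_ge0 exprn_ge0.
  by rewrite subr_ge0 ltW.
have hkA : 0 <= kA by rewrite /kA /kappaA mulr_ge0 // bigmax0_ge0.
have hkB : 0 <= kB by rewrite /kB /kappaB mulr_ge0 // bigmax0_ge0.
have h2p : forall e, 0 <= (2 : R) ^- e by move=> e; rewrite invr_ge0 exprn_ge0.
have hw : forall q, 0 <= w R t q by move=> q; exact: ltW (w_gt0 _ _ _).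
have hE0 : 0 <= E.
  rewrite /E /zeta; (repeat apply: addr_ge0); (repeat apply: mulr_ge0);
    by rewrite ?h2p ?hw ?ler0n ?bigmax0_ge0.
have eNAB : (map_mx Num.norm A *m map_mx Num.norm B) i j = \sum_(kk < k) `|A i kk| * `|B kk j|.
  by rewrite mxE; apply: eq_bigr => kk _; rewrite !mxE.
clear eNAB. rewrite [(map_mx _ A *m _) i j]mxE.
under eq_bigr => kk _ do rewrite !mxE.
set NAB := \sum_(kk < k) _.
have hNAB : 0 <= NAB by apply: sumr_ge0 => kk _; rewrite mulr_ge0.
have rf := fun kk => row_facts kk (nA i) (hal i).
have cf := fun kk => col_facts kk (fun i0 => nB i0 j) (hbe j).
have hx : forall kk, `|A i kk / al| <= 1.
  move=> kk; have [h1 h2 _ _] := rf kk.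
  by rewrite normrM normfV (gtr0_norm h1) ler_pdivrMr // mul1r ltW.
have hy : forall kk, `|B kk j / be| <= 1.
  move=> kk; have [h1 h2 _ _] := cf kk.
  by rewrite normrM normfV (gtr0_norm h1) ler_pdivrMr // mul1r ltW.
pose P := fun (l h : nat) => (l.+1 + h.+1 <= maxn sA sB + 1)%N.
pose X := fun l kk => slice t (A i kk / al) l.
pose Y := fun h kk => slice t (B kk j / be) h.
pose G := fun kk l h => al * be * ((w R t l * X l kk) * (w R t h * Y h kk)).
have eL : \sum_(x <- L) x = \sum_(l < sA) \sum_(h < sB | P l h) \sum_(kk < k) G kk l.+1 h.+1.
  rewrite big_map pairs_big; apply: eq_bigr => l _; apply: eq_bigr => h _.
  exact: eterm.
have eLn : \sum_(x <- L) `|x| = \sum_(l < sA) \sum_(h < sB | P l h) `|\sum_(kk < k) G kk l.+1 h.+1|.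
  rewrite big_map pairs_big; apply: eq_bigr => l _; apply: eq_bigr => h _.
  by rewrite eterm.
have hsize : size L = psi by rewrite size_map size_pairs.
have hfl1 := fl_err hf.
rewrite hsize in hfl1.
have hg : (1 + u) ^+ psi.-1 - 1 <= gamma u psi.
  apply: le_trans (gamma_bound hpsi); rewrite lerD2r.
  apply: ler_weXn2l; first by rewrite lerDl /u /unit_roundoff invr_ge0 exprn_ge0.
  exact: leq_pred.
have eS : \sum_(l < sA) \sum_(h < sB | P l h) \sum_(kk < k) G kk l.+1 h.+1 =
   \sum_(kk < k) al * be * \sum_(l < sA) \sum_(h < sB | P l h)
      (w R t l.+1 * X l.+1 kk) * (w R t h.+1 * Y h.+1 kk).
  under eq_bigr => l _ do rewrite exchange_big /=.
  rewrite exchange_big /=; apply: eq_bigr => kk _.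
  rewrite mulr_sumr; apply: eq_bigr => l _; rewrite mulr_sumr; apply: eq_bigr => h _.
  by [].
have eAB : (A *m B) i j = \sum_(kk < k) al * be * ((A i kk / al) * (B kk j / be)).
  rewrite mxE; apply: eq_bigr => kk _.
  have [h1 _ _ _] := rf kk; have [h2 _ _ _] := cf kk.
  by field; rewrite ?gt_eqF.
have h3 : `|(A *m B) i j - \sum_(x <- L) x| <= E * NAB.
  rewrite eAB eL eS -sumrB; apply: le_trans (ler_norm_sum _ _ _) _.
  rewrite /NAB mulr_sumr; apply: ler_sum => kk _.
  have [h1 h1' h1'' _] := rf kk; have [h2 h2' h2'' _] := cf kk.
  rewrite -mulrBr normrM (ger0_norm (x := al * be)); last by rewrite mulr_ge0 // ltW.
  have hk := perkk t sA sB (hx kk) (hy kk).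
  apply: le_trans (ler_wpM2l _ hk) _; first by rewrite mulr_ge0 // ltW.
  rewrite !normrM !normfV (gtr0_norm h1) (gtr0_norm h2).
  rewrite /E /zeta.
  rewrite [_%:R * w R t _]mulrC.
  apply: perkk_scale => //; first by rewrite mulr_ge0.
  by apply: mulr_ge0 => //; apply: mulr_ge0.
have h2 : \sum_(x <- L) `|x| <= NAB.
  rewrite eLn.
  apply: le_trans (_ : _ <= \sum_(l < sA) \sum_(h < sB | P l h) \sum_(kk < k) `|G kk l.+1 h.+1|) _.
    by apply: ler_sum => l _; apply: ler_sum => h _; apply: ler_norm_sum.
  apply: le_trans (_ : _ <= \sum_(l < sA) \sum_(h < sB) \sum_(kk < k) `|G kk l.+1 h.+1|) _.
    apply: ler_sum => l _; apply: sum_drop_cond => h.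
    by apply: sumr_ge0.
  under eq_bigr => l _ do rewrite exchange_big /=.
  rewrite exchange_big /=; apply: ler_sum => kk _.
  have [h1 h1' h1'' _] := rf kk; have [h2 h2' h2'' _] := cf kk.
  have hab : 0 <= al * be by rewrite mulr_ge0 // ltW.
  have -> : \sum_(l < sA) \sum_(h < sB) `|G kk l.+1 h.+1| =
     al * be * ((\sum_(l < sA) `|w R t l.+1 * X l.+1 kk|) *
                (\sum_(h < sB) `|w R t h.+1 * Y h.+1 kk|)).
    rewrite mulr_suml mulr_sumr; apply: eq_bigr => l _.
    rewrite mulr_sumr mulr_sumr; apply: eq_bigr => h _.
    by rewrite /G normrM (ger0_norm hab) normrM.
  have e : `|A i kk| * `|B kk j| = al * be * (`|A i kk / al| * `|B kk j / be|).
    rewrite !normrM !normfV (gtr0_norm h1) (gtr0_norm h2).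
    by rewrite /al /be; field; rewrite ?gt_eqF.
  rewrite e; apply: ler_wpM2l => //.
  apply: ler_pM; rewrite ?sumr_ge0 //; try exact: abs_sum_le.
have hfl2 : `|Chat i j - \sum_(x <- L) x| <= gamma u psi * NAB.
  apply: le_trans hfl1 _; apply: ler_pM => //.
  - by rewrite subr_ge0 exprn_ege1 // lerDl /u /unit_roundoff invr_ge0 exprn_ge0.
  - by apply: sumr_ge0.
have -> : (A *m B) i j - Chat i j =
   ((A *m B) i j - \sum_(x <- L) x) - (Chat i j - \sum_(x <- L) x) by ring.
apply: le_trans (ler_normB _ _) _.
have : 0 <= gamma u psi * E * NAB by rewrite mulr_ge0 // mulr_ge0.
nra.
Qed.
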